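(* Let $(X_n)_{n\ge0}$ be a Markov chain on $\mathbb Z_+$. Suppose there is an integer-valued random variable $\eta$ with $\mathbb E\eta>0$ such that for all $i\in\mathbb Z_+$ and $j\in\mathbb Z$, $\mathbb P\{\eta>j\}\le\mathbb P_i\{X_1-X_0>j\}$. Then there exists $\gamma>0$ such that $\sup_{i\in\mathbb Z_+}\mathbb E_ie^{\gamma\ell(i)}<\infty$.
   Context: $\mathbb P_i,\mathbb E_i$ denote probability and expectation given $X_0=i$; the local time at $i$ is $\ell(i):=\sum_{n=0}^\infty\mathbf 1\{X_n=i\}$. *)

(* Defs.v *)
From Stdlib Require Import Reals ZArith ClassicalEpsilon.
Open Scope R_scope.

(* Value of a series sum_{n>=0} f n (the limit when it converges;
   an unspecified real otherwise). All series used below converge. *)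
Definition tsum (f : nat -> R) : R :=
  epsilon (inhabits 0%R) (fun l => infinite_sum f l).

(* A transition kernel on Z_+ = nat: p i j = P_i{X_1 = j}. *)
Definition stochastic_kernel (p : nat -> nat -> R) : Prop :=
  (forall i j, 0 <= p i j) /\ (forall i, infinite_sum (p i) 1).

Definition jump_tail (p : nat -> nat -> R) (i : nat) (j : Z) : R :=
  tsum (fun y => if Z.ltb j (Z.of_nat y - Z.of_nat i) then p i y else 0).

Definition Z_law (q : Z -> R) : Prop :=
  (forall k, 0 <= q k) /\
  infinite_sum (fun n => q (Z.of_nat n) + q (- Z.of_nat n - 1)%Z) 1.

(* P{eta > j} = 1 - P{eta <= j} = 1 - sum_{n>=0} q (j - n) *)
Definition Z_tail (q : Z -> R) (j : Z) : R :=
  1 - tsum (fun n => q (j - Z.of_nat n)%Z).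

(* E eta > 0 : the negative part E eta^- = sum_n n q(-n) is finite and the
   positive part E eta^+ = sum_n n q(n) (possibly +infinity) exceeds it. *)
Definition Z_mean_pos (q : Z -> R) : Prop :=
  exists mneg : R,
    infinite_sum (fun n => INR n * q (- Z.of_nat n)%Z) mneg /\
    exists N : nat, sum_f_R0 (fun n => INR n * q (Z.of_nat n)) N > mneg.

Definition ind (b : bool) : R := if b then 1 else 0.

(* exp_loc p g i n x = E_x exp(g * #{0 <= m <= n : X_m = i}),
   computed by the Markov property. *)
Fixpoint exp_loc (p : nat -> nat -> R) (g : R) (i : nat) (n : nat) (x : nat)
  : R :=
  match n with
  | O => exp (g * ind (Nat.eqb x i))
  | S n' => exp (g * ind (Nat.eqb x i)) *
            tsum (fun y => p x y * exp_loc p g i n' y)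
  end.

(* Main.v *)
Require Import Defs.
From Coquelicot Require Import Coquelicot.
From Stdlib Require Import Reals ZArith Lia Lra ClassicalEpsilon FunctionalExtensionality.
Require Import Defs.
Open Scope R_scope.

Lemma tsum_is (s : nat -> R) l : is_series s l -> tsum s = l.
Proof.
  intros H. apply is_series_Reals in H. unfold tsum.
  assert (E: exists l, infinite_sum s l) by (exists l; exact H).
  pose proof (epsilon_spec (inhabits 0) (fun l => infinite_sum s l) E) as H2.
  eapply uniqueness_sum; eauto.
Qed.

Lemma ser_partial (a : nat -> R) l N :
  is_series a l -> (forall n, 0 <= a n) -> sum_f_R0 a N <= l.
Proof.
  intros H Hp. apply is_series_Reals in H.
  apply (growing_ineq (fun n => sum_f_R0 a n)); [|exact H].
  intros n; simpl; specialize (Hp (S n)); lra.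
Qed.

Lemma ser_nonneg (a : nat -> R) l : is_series a l -> (forall n, 0 <= a n) -> 0 <= l.
Proof.
  intros H Hp. pose proof (ser_partial a l 0 H Hp). simpl in H0. specialize (Hp 0%nat). lra.
Qed.

Lemma ser_plus (a b : nat -> R) la lb :
  is_series a la -> is_series b lb -> is_series (fun n => a n + b n) (la + lb).
Proof. intros; apply (is_series_plus a b la lb); auto. Qed.

Lemma ser_scal (c : R) (a : nat -> R) la :
  is_series a la -> is_series (fun n => c * a n) (c * la).
Proof. intros; apply (is_series_scal c a la); auto. Qed.

Lemma ser_ext (a b : nat -> R) l : (forall n, a n = b n) -> is_series a l -> is_series b l.
Proof. intros; eapply is_series_ext; eauto. Qed.

Lemma ser_minus (a b : nat -> R) la lb :
  is_series a la -> is_series b lb -> is_series (fun n => a n - b n) (la - lb).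
Proof.
  intros Ha Hb. apply (ser_ext (fun n => a n + (-1) * b n)).
  - intros; ring.
  - replace (la - lb) with (la + (-1)*lb) by ring.
    apply ser_plus; auto. apply ser_scal; auto.
Qed.

Lemma ser_le (a b : nat -> R) la lb :
  is_series a la -> is_series b lb -> (forall n, a n <= b n) -> la <= lb.
Proof.
  intros Ha Hb H. pose proof (ser_minus b a lb la Hb Ha).
  apply ser_nonneg in H0; [lra|]. intros n; specialize (H n); lra.
Qed.

Lemma ser_ex_dom (a b : nat -> R) lb :
  (forall n, Rabs (a n) <= b n) -> is_series b lb -> ex_series a.
Proof.
  intros H Hb. apply (ex_series_le a b); [exact H| exists lb; exact Hb].
Qed.


Lemma ser_ex_is (a : nat -> R) : ex_series a -> is_series a (tsum a).
Proof. intros H. pose proof (Series_correct a H). rewrite (tsum_is a (Series a)); auto. Qed.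

Lemma ser_bounded (a : nat -> R) E :
  (forall n, 0 <= a n) -> (forall N, sum_f_R0 a N <= E) ->
  exists l, is_series a l /\ l <= E.
Proof.
  intros Hp HB.
  destruct (growing_cv (fun n => sum_f_R0 a n)) as [l Hl].
  - intros n; simpl; specialize (Hp (S n)); lra.
  - exists E. intros x [n ->]. apply HB.
  - exists l. split. apply is_series_Reals; exact Hl.
    apply (Rle_cv_lim (Un:=fun n => sum_f_R0 a n) (Vn:=fun _ => E)); auto.
    intros eps He; exists 0%nat; intros; unfold R_dist; rewrite Rminus_diag, Rabs_R0; lra.
Qed.

Definition et (q : Z -> R) (f : Z -> R) (n : nat) : R :=
  q (Z.of_nat n) * f (Z.of_nat n) + q (- Z.of_nat n - 1)%Z * f (- Z.of_nat n - 1)%Z.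
Definition Eq q f := tsum (et q f).
Definition summ q f := exists l, is_series (et q f) l.

Lemma summ_is q f : summ q f -> is_series (et q f) (Eq q f).
Proof. intros [l H]. unfold Eq. rewrite (tsum_is _ l H). exact H. Qed.

Lemma Eq_is q f l : is_series (et q f) l -> Eq q f = l.
Proof. intros H; unfold Eq; apply tsum_is; auto. Qed.

Lemma zlaw_mass q : Z_law q -> is_series (fun n => q (Z.of_nat n) + q (- Z.of_nat n - 1)%Z) 1.
Proof. intros [_ H]. apply is_series_Reals; exact H. Qed.

Lemma summ_bdd q f B : Z_law q -> (forall z, Rabs (f z) <= B) -> summ q f.
Proof.
  intros Hq HB. pose proof (zlaw_mass q Hq) as Hm.
  destruct Hq as [Hq0 _].
  assert (H : ex_series (et q f)).
  { apply (ser_ex_dom _ (fun n => B * (q (Z.of_nat n) + q (- Z.of_nat n - 1)%Z)) (B * 1)).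
    - intros n. unfold et.
      eapply Rle_trans; [apply Rabs_triang|].
      rewrite !Rabs_mult, !(Rabs_pos_eq (q _)) by auto.
      specialize (HB (Z.of_nat n)) as H1. specialize (HB (- Z.of_nat n - 1)%Z) as H2.
      specialize (Hq0 (Z.of_nat n)) as H3. specialize (Hq0 (- Z.of_nat n - 1)%Z) as H4.
      rewrite Rmult_plus_distr_l.
      apply Rplus_le_compat; rewrite Rmult_comm; apply Rmult_le_compat_r; auto.
    - apply ser_scal; auto. }
  destruct H as [l Hl]; exists l; exact Hl.
Qed.

Lemma summ_plus q f g : summ q f -> summ q g -> summ q (fun z => f z + g z).
Proof.
  intros [a Ha] [b Hb]. exists (a+b). eapply ser_ext; [|apply ser_plus; [exact Ha|exact Hb]].
  intros n; unfold et; ring.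
Qed.

Lemma summ_scal q c f : summ q f -> summ q (fun z => c * f z).
Proof.
  intros [a Ha]. exists (c*a). eapply ser_ext; [|apply ser_scal; exact Ha].
  intros n; unfold et; ring.
Qed.

Lemma Eq_plus q f g : summ q f -> summ q g -> Eq q (fun z => f z + g z) = Eq q f + Eq q g.
Proof.
  intros Hf Hg. apply Eq_is. eapply ser_ext; [|apply ser_plus; apply summ_is; eauto].
  intros n; unfold et; ring.
Qed.

Lemma Eq_scal q c f : summ q f -> Eq q (fun z => c * f z) = c * Eq q f.
Proof.
  intros Hf. apply Eq_is. eapply ser_ext; [|apply ser_scal; apply summ_is; eauto].
  intros n; unfold et; ring.
Qed.

Lemma Eq_le q f g : Z_law q -> summ q f -> summ q g -> (forall z, f z <= g z) -> Eq q f <= Eq q g.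
Proof.
  intros [Hq _] Hf Hg H. apply (ser_le (et q f) (et q g)); try apply summ_is; auto.
  intros n; unfold et. specialize (Hq (Z.of_nat n)) as H3. specialize (Hq (- Z.of_nat n - 1)%Z) as H4.
  apply Rplus_le_compat; apply Rmult_le_compat_l; auto.
Qed.

Lemma Eq_const q c : Z_law q -> Eq q (fun _ => c) = c.
Proof.
  intros Hq. apply Eq_is. pose proof (zlaw_mass q Hq) as Hm.
  pose proof (ser_scal c _ _ Hm) as H. rewrite Rmult_1_r in H.
  eapply ser_ext; [|exact H]. intros n; unfold et; simpl; ring.
Qed.

Lemma Eq_ext q f g : (forall z, f z = g z) -> Eq q f = Eq q g.
Proof. intros H. assert (f = g) by (apply functional_extensionality; auto). subst; auto. Qed.

Lemma summ_ext q f g : (forall z, f z = g z) -> summ q f -> summ q g.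
Proof. intros H. assert (f = g) by (apply functional_extensionality; auto). subst; auto. Qed.

Definition negZ (z : Z) : R := if (z <? 0)%Z then - IZR z else 0.

Lemma negZ_nonneg z : 0 <= negZ z.
Proof.
  unfold negZ. destruct (Z.ltb_spec z 0). apply IZR_lt in H. lra. lra.
Qed.

Lemma Eq_neg q mneg : Z_law q -> infinite_sum (fun n => INR n * q (- Z.of_nat n)%Z) mneg ->
  summ q negZ /\ Eq q negZ = mneg.
Proof.
  intros Hq Hm. apply is_series_Reals in Hm.
  assert (H : is_series (et q negZ) mneg).
  { assert (H0 : is_series (fun k => INR (S k) * q (- Z.of_nat (S k))%Z) mneg).
    { apply (is_series_incr_1 (fun n => INR n * q (- Z.of_nat n)%Z)).
      simpl. rewrite Rmult_0_l. change (plus mneg 0) with (Rplus mneg 0). rewrite Rplus_0_r. exact Hm. }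
    eapply ser_ext; [|exact H0]. intros n. unfold et, negZ.
    replace (Z.of_nat n <? 0)%Z with false by (symmetry; apply Z.ltb_ge; lia).
    replace (- Z.of_nat n - 1 <? 0)%Z with true by (symmetry; apply Z.ltb_lt; lia).
    replace (- Z.of_nat (S n))%Z with (- Z.of_nat n - 1)%Z by lia.
    rewrite minus_IZR, opp_IZR, <- INR_IZR_INZ, S_INR. ring. }
  split. exists mneg; auto. apply Eq_is; auto.
Qed.

Definition kt (p : nat -> nat -> R) x (f : nat -> R) (y : nat) := p x y * f y.
Definition K p x f := tsum (kt p x f).

Lemma K_is p x f B : stochastic_kernel p -> (forall y, Rabs (f y) <= B) -> is_series (kt p x f) (K p x f).
Proof.
  intros [Hp0 Hp1] HB.
  assert (H : ex_series (kt p x f)).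
  { apply (ser_ex_dom _ (fun y => B * p x y) (B * 1)).
    - intros n. unfold kt. rewrite Rabs_mult, (Rabs_pos_eq (p x n)) by auto.
      rewrite Rmult_comm. apply Rmult_le_compat_r; auto.
    - apply ser_scal; auto. apply is_series_Reals; auto. }
  apply ser_ex_is in H. exact H.
Qed.

Lemma K_lin p x f g c Bf Bg : stochastic_kernel p -> (forall y, Rabs (f y) <= Bf) -> (forall y, Rabs (g y) <= Bg) ->
  K p x (fun y => f y + c * g y) = K p x f + c * K p x g.
Proof.
  intros Hp Hf Hg. unfold K at 1. apply tsum_is.
  eapply ser_ext; [|apply ser_plus; [eapply K_is; eauto | apply ser_scal; eapply K_is; eauto]].
  intros n; unfold kt; ring.
Qed.

Lemma K_le p x f g Bf Bg : stochastic_kernel p -> (forall y, Rabs (f y) <= Bf) -> (forall y, Rabs (g y) <= Bg) ->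
  (forall y, f y <= g y) -> K p x f <= K p x g.
Proof.
  intros Hp Hf Hg H. apply (ser_le (kt p x f) (kt p x g)); try (eapply K_is; eauto).
  intros n; unfold kt. apply Rmult_le_compat_l; auto. destruct Hp; auto.
Qed.

Lemma K_const p x c : stochastic_kernel p -> K p x (fun _ => c) = c.
Proof.
  intros [Hp0 Hp1]. unfold K; apply tsum_is. pose proof (ser_scal c _ _ (proj2 (is_series_Reals _ _) (Hp1 x))) as H. rewrite Rmult_1_r in H.
  eapply ser_ext; [|exact H].
  intros n; unfold kt; ring.
Qed.

Fixpoint isum (F : Z -> R) (a : Z) (n : nat) : R :=
  match n with O => 0 | S n' => isum F a n' + F (a + Z.of_nat n')%Z end.

Lemma isum_S F a n : isum F a (S n) = isum F a n + F (a + Z.of_nat n)%Z.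
Proof. reflexivity. Qed.

Lemma isum_add F a n m : isum F a (n + m) = isum F a n + isum F (a + Z.of_nat n)%Z m.
Proof.
  induction m as [|m IH]; simpl.
  - rewrite Nat.add_0_r; ring.
  - rewrite Nat.add_succ_r; simpl. rewrite IH.
    replace (a + Z.of_nat (n + m))%Z with (a + Z.of_nat n + Z.of_nat m)%Z by lia. ring.
Qed.

Lemma isum_nonneg F a n : (forall z, 0 <= F z) -> 0 <= isum F a n.
Proof. intros H; induction n; simpl; [lra|]. specialize (H (a + Z.of_nat n)%Z); lra. Qed.

Lemma isum_mono F a n b m : (forall z, 0 <= F z) -> (b <= a)%Z -> (a + Z.of_nat n <= b + Z.of_nat m)%Z ->
  isum F a n <= isum F b m.
Proof.
  intros HF H1 H2.
  set (d := Z.to_nat (a - b)).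
  assert (Hd : Z.of_nat d = (a - b)%Z) by (unfold d; rewrite Z2Nat.id; lia).
  clearbody d. assert (Hm : m = (d + n + (m - d - n))%nat) by lia.
  set (r := (m - d - n)%nat) in Hm. clearbody r.
  rewrite Hm, isum_add, isum_add.
  replace (b + Z.of_nat d)%Z with a by lia.
  pose proof (isum_nonneg F b d HF). pose proof (isum_nonneg F (b + Z.of_nat (d + n)) r HF).
  lra.
Qed.

Lemma isum_cons F a n : isum F (a - 1)%Z (S n) = F (a - 1)%Z + isum F a n.
Proof.
  replace (S n) with (1 + n)%nat by lia. rewrite isum_add. simpl.
  replace (a - 1 + 1)%Z with a by lia. replace (a - 1 + 0)%Z with (a-1)%Z by lia. ring.
Qed.

Lemma et_partial q G M :
  sum_f_R0 (et q G) M = isum (fun z => q z * G z) (- Z.of_nat M - 1)%Z (2 * M + 2).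
Proof.
  induction M as [|M IH].
  - simpl. unfold et. simpl. ring.
  - simpl sum_f_R0. rewrite IH.
    replace (2 * S M + 2)%nat with (S (S (2 * M + 2))) by lia.
    replace (- Z.of_nat (S M) - 1)%Z with ((- Z.of_nat M - 1) - 1)%Z by lia.
    rewrite isum_cons. rewrite (isum_S _ _ (2 * M + 2)).
    replace (- Z.of_nat M - 1 + Z.of_nat (2 * M + 2))%Z with (Z.of_nat (S M)) by lia.
    unfold et. replace (- Z.of_nat M - 1 - 1)%Z with (- Z.of_nat (S M) - 1)%Z by lia. ring.
Qed.

Lemma s_partial (F : Z -> R) q j N : (forall z, (z <= j)%Z -> F z = q z) ->
  sum_f_R0 (fun n => q (j - Z.of_nat n)%Z) N = isum F (j - Z.of_nat N)%Z (S N).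
Proof.
  intros HF. induction N as [|N IH].
  - simpl sum_f_R0. rewrite isum_S. simpl isum. simpl Z.of_nat.
    rewrite Rplus_0_l. rewrite HF by lia. f_equal; lia.
  - simpl sum_f_R0. rewrite IH.
    replace (j - Z.of_nat (S N))%Z with ((j - Z.of_nat N) - 1)%Z by lia.
    rewrite (isum_cons F (j - Z.of_nat N)%Z (S N)). rewrite HF by lia. replace (j - Z.pos (Pos.of_succ_nat N))%Z with (j - Z.of_nat N - 1)%Z by lia. ring.
Qed.

Lemma ind_le1 b : Rabs (ind b) <= 1.
Proof. destruct b; simpl; rewrite ?Rabs_R1, ?Rabs_R0; lra. Qed.

Lemma ind_nonneg b : 0 <= ind b.
Proof. destruct b; simpl; lra. Qed.

Lemma tail_le q j : Z_law q -> Eq q (fun z => ind (Z.ltb j z)) <= Z_tail q j.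
Proof.
  intros Hq.
  set (G := fun z => ind (Z.leb z j)).
  assert (HG : summ q G) by (apply (summ_bdd q G 1 Hq); intros; apply ind_le1).
  assert (HH : summ q (fun z => ind (Z.ltb j z))) by (apply (summ_bdd _ _ 1 Hq); intros; apply ind_le1).
  assert (Hsum : Eq q G + Eq q (fun z => ind (Z.ltb j z)) = 1).
  { rewrite <- Eq_plus by auto. rewrite <- (Eq_const q 1 Hq). apply Eq_ext. intros z. unfold G.
    destruct (Z.leb_spec z j), (Z.ltb_spec j z); simpl; try lia; ring. }
  set (F := fun z => q z * G z).
  assert (HF0 : forall z, 0 <= F z).
  { intros z; unfold F; apply Rmult_le_pos; [apply Hq| apply ind_nonneg]. }
  assert (Hpart : forall N, sum_f_R0 (fun n => q (j - Z.of_nat n)%Z) N <= Eq q G).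
  { intros N. rewrite (s_partial F q j N).
    2:{ intros z Hz. unfold F, G. destruct (Z.leb_spec z j); [simpl; ring| lia]. }
    set (M := (Z.to_nat (Z.abs j) + N)%nat).
    eapply Rle_trans. apply (isum_mono F _ _ (- Z.of_nat M - 1)%Z (2 * M + 2)); auto; unfold M; lia.
    unfold F. rewrite <- et_partial. apply ser_partial. apply summ_is; auto.
    intros n; unfold et. rewrite <- (Rplus_0_l 0).
    apply Rplus_le_compat; apply Rmult_le_pos; try apply Hq; apply ind_nonneg. }
  destruct (ser_bounded (fun n => q (j - Z.of_nat n)%Z) (Eq q G)) as [l [Hl Hle]]; auto.
  intros; apply Hq.
  unfold Z_tail. rewrite (tsum_is _ l Hl). lra.
Qed.

Lemma lim_le X Y C : 0 <= C -> (forall D : nat, X <= Y + C / (INR D + 1)) -> X <= Y.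
Proof.
  intros HC H. destruct (Rle_or_lt X Y) as [h|h]; [exact h|exfalso].
  set (e := X - Y). assert (He : 0 < e) by (unfold e; lra).
  destruct (archimed (C / e)) as [Hu _].
  set (D := Z.to_nat (up (C / e))).
  assert (HD : IZR (up (C / e)) <= INR D).
  { unfold D. destruct (Z_le_gt_dec 0 (up (C/e))).
    - rewrite INR_IZR_INZ, Z2Nat.id by lia. lra.
    - apply Rle_trans with 0; [apply IZR_le; lia| apply pos_INR]. }
  specialize (H D).
  assert (HD1 : 0 < INR D + 1) by (pose proof (pos_INR D); lra).
  assert (C / (INR D + 1) < e).
  { apply Rmult_lt_reg_r with (INR D + 1); auto. unfold Rdiv. rewrite Rmult_assoc, Rinv_l by lra.
    assert (C / e < INR D + 1) by lra.
    apply Rmult_lt_reg_r with (/ e). apply Rinv_0_lt_compat; auto.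
    replace (C * 1 * / e) with (C / e) by (unfold Rdiv; ring).
    replace (e * (INR D + 1) * / e) with (INR D + 1) by (field; lra). lra. }
  unfold e in H0. lra.
Qed.

Definition Pk p x (psi : Z -> R) := K p x (fun y => psi (Z.of_nat y - Z.of_nat x)%Z).
Definition Qk q L (psi : Z -> R) := Eq q (fun z => psi (Z.min z L)).

Lemma K_ext p x f g : (forall y, f y = g y) -> K p x f = K p x g.
Proof. intros H. assert (f = g) by (apply functional_extensionality; auto). subst; auto. Qed.

Lemma jump_tail_K p x a : jump_tail p x a = K p x (fun y => ind (a <? Z.of_nat y - Z.of_nat x)%Z).
Proof.
  unfold jump_tail, K. f_equal. apply functional_extensionality. intros y. unfold kt.
  destruct (a <? _)%Z; simpl; ring.
Qed.

Lemma bdd01 (f : Z -> R) : (forall d, 0 <= f d <= 1) -> forall d, Rabs (f d) <= 1.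
Proof. intros H d. specialize (H d). rewrite Rabs_pos_eq; lra. Qed.

Ltac bd := first [assumption | intros; first [apply ind_le1 | rewrite Rabs_R1; lra | apply bdd01; assumption]].

Lemma step_dom p q L x : stochastic_kernel p -> Z_law q ->
  (forall i j, Z_tail q j <= jump_tail p i j) ->
  forall h : nat, forall psi : Z -> R,
  (forall d, 0 <= psi d <= 1) -> (forall d d', (d <= d')%Z -> psi d' <= psi d) ->
  (forall d, (d <= L - Z.of_nat h)%Z -> psi d = psi (L - Z.of_nat h)%Z) ->
  (forall d, (L <= d)%Z -> psi d = psi L) ->
  Pk p x psi <= Qk q L psi.
Proof.
  intros Hp Hq Hdom h. induction h as [|h IH]; intros psi H01 Hmon Hlo Hhi.
  - assert (Hc : forall d, psi d = psi L).
    { intros d. destruct (Z_le_gt_dec L d). apply Hhi; lia.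
      rewrite Hlo by lia. f_equal; lia. }
    unfold Pk, Qk. rewrite (K_ext p x _ (fun _ => psi L)) by (intros; apply Hc).
    rewrite (Eq_ext q _ (fun _ => psi L)) by (intros; apply Hc).
    rewrite K_const, Eq_const by auto. lra.
  - remember (L - Z.of_nat (S h))%Z as a eqn:Ha.
    set (psi' := fun d => if (d <=? a)%Z then psi (a + 1)%Z else psi d).
    set (c := psi a - psi (a + 1)%Z).
    assert (Hc0 : 0 <= c) by (unfold c; pose proof (Hmon a (a+1)%Z ltac:(lia)); lra).
    assert (Hdec : forall d, psi d = psi' d + c * ind (d <=? a)%Z).
    { intros d. unfold psi', c. destruct (Z.leb_spec d a); simpl.
      - rewrite (Hlo d) by lia. subst a. ring.
      - ring. }
    assert (H01' : forall d, 0 <= psi' d <= 1).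
    { intros d; unfold psi'; destruct (d <=? a)%Z; auto. }
    assert (IH' : Pk p x psi' <= Qk q L psi').
    { apply IH; auto.
      - intros d d' Hd. unfold psi'. destruct (Z.leb_spec d a), (Z.leb_spec d' a); try lra; apply Hmon; lia.
      - intros d Hd. unfold psi'. destruct (Z.leb_spec d a), (Z.leb_spec (L - Z.of_nat h) a); try lia;
        f_equal; lia.
      - intros d Hd. unfold psi'. destruct (Z.leb_spec d a), (Z.leb_spec L a); try lia. apply Hhi; lia. }
    assert (HP : Pk p x psi = Pk p x psi' + c * (1 - jump_tail p x a)).
    { unfold Pk. rewrite (K_ext p x _ (fun y => psi' (Z.of_nat y - Z.of_nat x)%Z + c * ind ((Z.of_nat y - Z.of_nat x) <=? a)%Z))
        by (intros; apply Hdec).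
      rewrite (K_lin p x _ _ c 1 1) by bd.
      rewrite jump_tail_K. f_equal. f_equal.
      assert (Hs : K p x (fun y => ind (Z.of_nat y - Z.of_nat x <=? a)%Z) + 1 * K p x (fun y => ind (a <? Z.of_nat y - Z.of_nat x)%Z) = 1).
      { rewrite <- (K_lin p x _ _ 1 1 1) by bd. transitivity (K p x (fun _ => 1)); [|apply K_const; auto]. apply K_ext; intros y.
        destruct (Z.leb_spec (Z.of_nat y - Z.of_nat x) a), (Z.ltb_spec a (Z.of_nat y - Z.of_nat x)); simpl; try lia; ring. }
      lra. }
    assert (HQ : Qk q L psi = Qk q L psi' + c * (1 - Eq q (fun z => ind (a <? z)%Z))).
    { unfold Qk. rewrite (Eq_ext q _ (fun z => psi' (Z.min z L) + c * ind (z <=? a)%Z)).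
      2:{ intros z. rewrite Hdec. f_equal. f_equal. f_equal.
          destruct (Z.leb_spec (Z.min z L) a), (Z.leb_spec z a); auto; lia. }
      assert (S1 : summ q (fun z => psi' (Z.min z L))) by (apply (summ_bdd _ _ 1 Hq); intros; apply (bdd01 psi' H01')).
      assert (S2 : summ q (fun z => ind (z <=? a)%Z)) by (apply (summ_bdd _ _ 1 Hq); intros; apply ind_le1).
      rewrite Eq_plus by (auto; apply summ_scal; auto). rewrite Eq_scal by auto.
      f_equal. f_equal.
      assert (S3 : summ q (fun z => ind (a <? z)%Z)) by (apply (summ_bdd _ _ 1 Hq); intros; apply ind_le1).
      assert (Hs : Eq q (fun z => ind (z <=? a)%Z) + Eq q (fun z => ind (a <? z)%Z) = 1).
      { rewrite <- Eq_plus by auto. transitivity (Eq q (fun _ => 1)); [|apply Eq_const; auto]. apply Eq_ext; intros z.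
        destruct (Z.leb_spec z a), (Z.ltb_spec a z); simpl; try lia; ring. }
      lra. }
    rewrite HP, HQ.
    pose proof (tail_le q a Hq). pose proof (Hdom x a).
    assert (c * (1 - jump_tail p x a) <= c * (1 - Eq q (fun z => ind (a <? z)%Z))).
    { apply Rmult_le_compat_l; auto; lra. }
    lra.
Qed.

Lemma mneg_nonneg q mneg : Z_law q -> infinite_sum (fun n => INR n * q (- Z.of_nat n)%Z) mneg -> 0 <= mneg.
Proof.
  intros Hq Hm. destruct (Eq_neg q mneg Hq Hm) as [S E]. rewrite <- E.
  rewrite <- (Eq_const q 0 Hq). apply Eq_le; auto.
  apply (summ_bdd _ _ 0 Hq); intros; rewrite Rabs_R0; lra. apply negZ_nonneg.
Qed.

Lemma dom p q L x mneg : stochastic_kernel p -> Z_law q ->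
  (forall i j, Z_tail q j <= jump_tail p i j) -> (0 <= L)%Z ->
  infinite_sum (fun n => INR n * q (- Z.of_nat n)%Z) mneg ->
  forall phi : Z -> R, (forall d, 0 <= phi d <= 1) -> (forall d d', (d <= d')%Z -> phi d' <= phi d) ->
  Pk p x phi <= Qk q L phi.
Proof.
  intros Hp Hq Hdom HL Hm phi H01 Hmon.
  destruct (Eq_neg q mneg Hq Hm) as [Sn En].
  pose proof (mneg_nonneg q mneg Hq Hm) as Hm0.
  apply (lim_le _ _ mneg Hm0). intros D.
  set (psi := fun d => if (d <? - Z.of_nat D)%Z then 1 else if (L <? d)%Z then phi L else phi d).
  assert (P01 : forall d, 0 <= psi d <= 1).
  { intros d; unfold psi. destruct (d <? _)%Z; [lra|]. destruct (L <? d)%Z; auto. }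
  assert (Hle1 : Pk p x phi <= Pk p x psi).
  { unfold Pk. apply (K_le p x _ _ 1 1 Hp); try (intros; apply bdd01; auto).
    intros y. unfold psi. set (d := (Z.of_nat y - Z.of_nat x)%Z).
    destruct (Z.ltb_spec d (- Z.of_nat D)); [specialize (H01 d); lra|].
    destruct (Z.ltb_spec L d); [apply Hmon; lia| lra]. }
  assert (Hle2 : Pk p x psi <= Qk q L psi).
  { apply (step_dom p q L x Hp Hq Hdom (Z.to_nat (L + Z.of_nat D + 1))); auto.
    - intros d d' Hd. unfold psi.
      destruct (Z.ltb_spec d (- Z.of_nat D)), (Z.ltb_spec d' (- Z.of_nat D)); try lia;
      destruct (Z.ltb_spec L d), (Z.ltb_spec L d'); try lia; try lra;
      try (specialize (H01 d'); lra); try (specialize (H01 L); lra); try (specialize (H01 d); lra);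
      apply Hmon; lia.
    - intros d Hd. rewrite Z2Nat.id in * by lia. unfold psi.
      destruct (Z.ltb_spec d (- Z.of_nat D)), (Z.ltb_spec (L - (L + Z.of_nat D + 1)) (- Z.of_nat D)); lia || reflexivity.
    - intros d Hd. unfold psi.
      destruct (Z.ltb_spec d (- Z.of_nat D)), (Z.ltb_spec L (- Z.of_nat D)); try lia.
      destruct (Z.ltb_spec L d), (Z.ltb_spec L L); try lia; auto. f_equal; lia. }
  assert (Hle3 : Qk q L psi <= Qk q L phi + / (INR D + 1) * mneg).
  { unfold Qk. rewrite <- En.
    assert (S1 : summ q (fun z => phi (Z.min z L))) by (apply (summ_bdd _ _ 1 Hq); intros; apply bdd01; auto).
    rewrite <- Eq_scal, <- Eq_plus by (auto; apply summ_scal; auto).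
    apply Eq_le; auto.
    - apply (summ_bdd _ _ 1 Hq); intros; apply bdd01; auto.
    - apply summ_plus; auto; apply summ_scal; auto.
    - intros z. unfold psi. pose proof (negZ_nonneg z).
      assert (HD : 0 < / (INR D + 1)) by (apply Rinv_0_lt_compat; pose proof (pos_INR D); lra).
      destruct (Z.ltb_spec (Z.min z L) (- Z.of_nat D)).
      + assert (negZ z >= INR D + 1).
        { unfold negZ. destruct (Z.ltb_spec z 0); [|lia].
          rewrite INR_IZR_INZ. rewrite <- opp_IZR. apply Rle_ge. rewrite <- plus_IZR. apply IZR_le. lia. }
        assert (/ (INR D + 1) * negZ z >= 1).
        { assert (Hx : / (INR D + 1) * (INR D + 1) = 1) by (field; pose proof (pos_INR D); lra).
          assert (/ (INR D + 1) * (INR D + 1) <= / (INR D + 1) * negZ z) by (apply Rmult_le_compat_l; lra).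
          lra. }
        specialize (H01 (Z.min z L)). lra.
      + destruct (Z.ltb_spec L (Z.min z L)); [lia|].
        assert (0 <= / (INR D + 1) * negZ z) by (apply Rmult_le_pos; lra). lra. }
  unfold Rdiv. rewrite Rmult_comm. lra.
Qed.

Fixpoint a (q : Z -> R) (L : Z) (m : nat) (k : Z) : R :=
  match m with
  | O => ind (0 <? k)%Z
  | S m' => if (0 <? k)%Z then Eq q (fun z => a q L m' (k + Z.min z L)%Z) else 0
  end.

Lemma a01 q L m k : Z_law q -> 0 <= a q L m k <= 1.
Proof.
  intros Hq. revert k; induction m as [|m IH]; intros k; simpl.
  - destruct (0 <? k)%Z; simpl; lra.
  - destruct (0 <? k)%Z; [|lra].
    assert (S1 : summ q (fun z => a q L m (k + Z.min z L)%Z)).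
    { apply (summ_bdd _ _ 1 Hq). intros z; specialize (IH (k + Z.min z L)%Z). rewrite Rabs_pos_eq; lra. }
    split.
    + rewrite <- (Eq_const q 0 Hq). apply Eq_le; auto. apply (summ_bdd _ _ 0 Hq); intros; rewrite Rabs_R0; lra.
      intros z; apply IH.
    + rewrite <- (Eq_const q 1 Hq). apply Eq_le; auto. apply (summ_bdd _ _ 1 Hq); intros; rewrite Rabs_R1; lra.
      intros z; apply IH.
Qed.

Lemma a_abs q L m k : Z_law q -> Rabs (a q L m k) <= 1.
Proof. intros Hq; pose proof (a01 q L m k Hq); rewrite Rabs_pos_eq; lra. Qed.

Lemma a_summ q L m k : Z_law q -> summ q (fun z => a q L m (k + Z.min z L)%Z).
Proof. intros Hq; apply (summ_bdd _ _ 1 Hq); intros; apply a_abs; auto. Qed.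

Lemma a_le0 q L m k : (k <= 0)%Z -> a q L m k = 0.
Proof.
  intros Hk. destruct m; simpl; destruct (Z.ltb_spec 0 k); simpl; auto; lia.
Qed.

Lemma a_mono q L m k k' : Z_law q -> (k <= k')%Z -> a q L m k <= a q L m k'.
Proof.
  intros Hq. revert k k'; induction m as [|m IH]; intros k k' Hk; simpl.
  - destruct (Z.ltb_spec 0 k), (Z.ltb_spec 0 k'); simpl; try lia; lra.
  - destruct (Z.ltb_spec 0 k), (Z.ltb_spec 0 k'); try lia.
    + apply Eq_le; auto; try apply a_summ; auto. intros z; apply IH; lia.
    + pose proof (a01 q L (S m) k' Hq) as Ha. simpl in Ha.
      destruct (Z.ltb_spec 0 k'); try lia. lra.
    + lra.
Qed.

Lemma a_step q L m k : Z_law q -> a q L (S m) k <= a q L m k.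
Proof.
  intros Hq. revert k; induction m as [|m IH]; intros k.
  - simpl. destruct (Z.ltb_spec 0 k); simpl; [|lra].
    apply Rle_trans with (Eq q (fun _ => 1)); [|rewrite Eq_const; auto; unfold ind; lra].
    apply Eq_le; auto. apply (summ_bdd _ _ 1 Hq); intros; apply ind_le1.
    apply (summ_bdd _ _ 1 Hq); intros; rewrite Rabs_R1; lra.
    intros z. destruct (0 <? k + Z.min z L)%Z; simpl; lra.
  - change (a q L (S (S m)) k) with (if (0 <? k)%Z then Eq q (fun z => a q L (S m) (k + Z.min z L)%Z) else 0).
    change (a q L (S m) k) with (if (0 <? k)%Z then Eq q (fun z => a q L m (k + Z.min z L)%Z) else 0).
    destruct (0 <? k)%Z; [|lra]. apply Eq_le; auto; try apply a_summ; auto.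
Qed.

Lemma a_anti q L m m' k : Z_law q -> (m <= m')%nat -> a q L m' k <= a q L m k.
Proof.
  intros Hq H. induction H; [lra|]. eapply Rle_trans; [apply a_step; auto| auto].
Qed.

Lemma a_markov q L mneg m k : Z_law q -> (0 <= L)%Z ->
  infinite_sum (fun n => INR n * q (- Z.of_nat n)%Z) mneg ->
  (1 - a q L m k) * IZR k <= INR m * mneg.
Proof.
  intros Hq HL Hm. destruct (Eq_neg q mneg Hq Hm) as [Sn En].
  pose proof (mneg_nonneg q mneg Hq Hm) as Hm0.
  revert k; induction m as [|m IH]; intros k.
  - simpl. destruct (Z.ltb_spec 0 k); simpl.
    + lra.
    + apply IZR_le in H. lra.
  - destruct (Z.ltb_spec 0 k) as [Hk|Hk].
    2:{ rewrite a_le0 by lia. apply IZR_le in Hk. pose proof (pos_INR (S m)). nra. }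
    change (a q L (S m) k) with (if (0 <? k)%Z then Eq q (fun z => a q L m (k + Z.min z L)%Z) else 0).
    replace (0 <? k)%Z with true by (symmetry; apply Z.ltb_lt; lia).
    assert (E1 : (1 - Eq q (fun z => a q L m (k + Z.min z L)%Z)) * IZR k =
                 Eq q (fun z => IZR k + (- IZR k) * a q L m (k + Z.min z L)%Z)).
    { rewrite Eq_plus, Eq_scal, Eq_const; auto; try apply a_summ; auto.
      ring. apply (summ_bdd _ _ (Rabs (IZR k)) Hq); intros; lra. apply summ_scal, a_summ; auto. }
    rewrite E1.
    assert (E2 : INR (S m) * mneg = Eq q (fun z => INR m * mneg + 1 * negZ z)).
    { rewrite Eq_plus, Eq_const, (Eq_scal q 1 negZ), En; auto. rewrite S_INR. ring.
      apply (summ_bdd _ _ (Rabs (INR m * mneg)) Hq); intros; lra. apply summ_scal; auto. }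
    rewrite E2. apply Eq_le; auto.
    + apply summ_plus. apply (summ_bdd _ _ (Rabs (IZR k)) Hq); intros; lra. apply summ_scal, a_summ; auto.
    + apply summ_plus. apply (summ_bdd _ _ (Rabs (INR m * mneg)) Hq); intros; lra. apply summ_scal; auto.
    + intros z. specialize (IH (k + Z.min z L)%Z). rewrite plus_IZR in IH.
      pose proof (a01 q L m (k + Z.min z L)%Z Hq).
      destruct (Z_le_gt_dec 0 (Z.min z L)).
      * apply IZR_le in l. pose proof (negZ_nonneg z). nra.
      * assert (Hz : Z.min z L = z) by lia. rewrite Hz in *.
        assert (negZ z = - IZR z) by (unfold negZ; destruct (Z.ltb_spec z 0); [auto|lia]).
        assert (IZR z < 0) by (apply IZR_lt; lia). nra.
Qed.

Fixpoint fsum (f : nat -> R) (N : nat) : R := match N with O => 0 | S N' => fsum f N' + f N' end.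

Lemma fsum_ext f g N : (forall k, f k = g k) -> fsum f N = fsum g N.
Proof. intros H; induction N; simpl; auto. rewrite IHN, H; auto. Qed.

Lemma fsum_minus f g N : fsum (fun k => f k - g k) N = fsum f N - fsum g N.
Proof. induction N; simpl; [ring|]. rewrite IHN; ring. Qed.

Lemma telesc g N : fsum (fun k => g (S k) - g k) N = g N - g 0%nat.
Proof. induction N; simpl; [ring|]. rewrite IHN; ring. Qed.

Lemma fsum_le f g N : (forall k, f k <= g k) -> fsum f N <= fsum g N.
Proof. intros H; induction N; simpl; [lra|]. specialize (H N); lra. Qed.

Lemma fsum_le_const f c n : (forall k, (k < n)%nat -> f k <= c) -> fsum f n <= INR n * c.
Proof.
  intros H; induction n; cbn [fsum]; [simpl; lra|]. rewrite S_INR.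
  assert (fsum f n <= INR n * c) by (apply IHn; intros; apply H; lia). specialize (H n ltac:(lia)). lra.
Qed.

Lemma fsum_abs f N B : (forall k, Rabs (f k) <= B) -> Rabs (fsum f N) <= INR N * B.
Proof.
  intros H; induction N; cbn [fsum]; [simpl; rewrite Rabs_R0; lra|]. rewrite S_INR.
  eapply Rle_trans; [apply Rabs_triang|]. specialize (H N). lra.
Qed.

Definition posZ (z : Z) : R := if (0 <? z)%Z then IZR z else 0.
Definition T (al : Z -> R) (x : Z) (N : nat) := fsum (fun k => al (Z.of_nat k + 1 + x)%Z - al (Z.of_nat k + 1)%Z) N.

Lemma T_pos al N : (forall k, 0 <= al k <= 1) -> (forall k k', (k <= k')%Z -> al k <= al k') ->
  forall n : nat, T al (Z.of_nat n) N >= INR n * (al (Z.of_nat N + 1)%Z - al (Z.of_nat n)).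
Proof.
  intros H01 Hmon n. induction n as [|n IH].
  - unfold T. rewrite (fsum_ext _ (fun _ => 0)). 
    + clear. simpl. induction N; simpl; lra.
    + intros k. replace (Z.of_nat k + 1 + Z.of_nat 0)%Z with (Z.of_nat k + 1)%Z by lia. ring.
  - assert (Hd : T al (Z.of_nat (S n)) N - T al (Z.of_nat n) N = al (Z.of_nat N + 1 + Z.of_nat n)%Z - al (1 + Z.of_nat n)%Z).
    { unfold T. rewrite <- fsum_minus.
      transitivity (fsum (fun k => (fun j => al (Z.of_nat j + 1 + Z.of_nat n)%Z) (S k) - (fun j => al (Z.of_nat j + 1 + Z.of_nat n)%Z) k) N).
      { apply fsum_ext. intros k. cbv beta.
        replace (Z.of_nat (S k) + 1 + Z.of_nat n)%Z with (Z.of_nat k + 1 + Z.of_nat (S n))%Z by lia. ring. }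
      rewrite (telesc (fun j => al (Z.of_nat j + 1 + Z.of_nat n)%Z)). cbv beta. f_equal; f_equal; lia. }
    rewrite S_INR.
    assert (h1 : al (Z.of_nat n) <= al (Z.of_nat (S n))) by (apply Hmon; lia).
    assert (h2 : al (Z.of_nat N + 1)%Z <= al (Z.of_nat N + 1 + Z.of_nat n)%Z) by (apply Hmon; lia).
    replace (1 + Z.of_nat n)%Z with (Z.of_nat (S n)) in Hd by lia.
    pose proof (pos_INR n). nra.
Qed.

Lemma T_neg al N : (forall k, 0 <= al k <= 1) ->
  forall y : nat, T al (- Z.of_nat y)%Z N >= - INR y.
Proof.
  intros H01 y. induction y as [|y IH].
  - unfold T. rewrite (fsum_ext _ (fun _ => 0)).
    + clear. simpl. induction N; simpl; lra.
    + intros k. replace (Z.of_nat k + 1 + - Z.of_nat 0)%Z with (Z.of_nat k + 1)%Z by lia. ring.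
  - assert (Hd : T al (- Z.of_nat (S y))%Z N - T al (- Z.of_nat y)%Z N = - (al (Z.of_nat N - Z.of_nat y)%Z - al (- Z.of_nat y)%Z)).
    { unfold T. rewrite <- fsum_minus.
      transitivity (- fsum (fun k => (fun j => al (Z.of_nat j - Z.of_nat y)%Z) (S k) - (fun j => al (Z.of_nat j - Z.of_nat y)%Z) k) N).
      - transitivity (fsum (fun k => - ((fun j => al (Z.of_nat j - Z.of_nat y)%Z) (S k) - (fun j => al (Z.of_nat j - Z.of_nat y)%Z) k)) N).
        + apply fsum_ext. intros k. cbv beta.
          replace (Z.of_nat k + 1 + - Z.of_nat (S y))%Z with (Z.of_nat k - Z.of_nat y)%Z by lia.
          replace (Z.of_nat k + 1 + - Z.of_nat y)%Z with (Z.of_nat (S k) - Z.of_nat y)%Z by lia. ring.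
        + clear. induction N; cbn [fsum]; [ring|]. rewrite IHN; ring.
      - rewrite (telesc (fun j => al (Z.of_nat j - Z.of_nat y)%Z)). cbv beta. replace (Z.of_nat 0 - Z.of_nat y)%Z with (- Z.of_nat y)%Z by lia. reflexivity. }
    rewrite S_INR. pose proof (H01 (Z.of_nat N - Z.of_nat y)%Z). pose proof (H01 (- Z.of_nat y)%Z). lra.
Qed.

Lemma perx al L x N : (forall k, 0 <= al k <= 1) -> (forall k k', (k <= k')%Z -> al k <= al k') ->
  (x <= L)%Z -> (0 <= L)%Z ->
  posZ x - T al x N <= negZ x + IZR L * al x + IZR L * (1 - al (Z.of_nat N + 1)%Z).
Proof.
  intros H01 Hmon HxL HL.
  destruct (Z_le_gt_dec 0 x).
  - destruct (Z_of_nat_complete x l) as [n ->].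
    pose proof (T_pos al N H01 Hmon n).
    assert (posZ (Z.of_nat n) = INR n).
    { unfold posZ. rewrite INR_IZR_INZ. destruct (Z.ltb_spec 0 (Z.of_nat n)); auto. replace (Z.of_nat n) with 0%Z by lia. auto. }
    assert (negZ (Z.of_nat n) = 0) by (unfold negZ; destruct (Z.ltb_spec (Z.of_nat n) 0); [lia|auto]).
    assert (INR n <= IZR L) by (rewrite INR_IZR_INZ; apply IZR_le; lia).
    pose proof (pos_INR n). pose proof (H01 (Z.of_nat n)). pose proof (H01 (Z.of_nat N + 1)%Z).
    nra.
  - assert (Hx : x = (- Z.of_nat (Z.to_nat (- x)))%Z) by lia.
    pose proof (T_neg al N H01 (Z.to_nat (- x))). rewrite <- Hx in H.
    assert (posZ x = 0) by (unfold posZ; destruct (Z.ltb_spec 0 x); [lia|auto]).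
    assert (negZ x = INR (Z.to_nat (- x))).
    { unfold negZ. destruct (Z.ltb_spec x 0); [|lia]. rewrite INR_IZR_INZ, Z2Nat.id by lia. rewrite opp_IZR; auto. }
    assert (0 <= IZR L) by (apply IZR_le; lia).
    pose proof (H01 x). pose proof (H01 (Z.of_nat N + 1)%Z). nra.
Qed.

Lemma Eq_fsum q F N B : Z_law q -> (forall k z, Rabs (F k z) <= B) ->
  summ q (fun z => fsum (fun k => F k z) N) /\
  Eq q (fun z => fsum (fun k => F k z) N) = fsum (fun k => Eq q (F k)) N.
Proof.
  intros Hq HB. split.
  - apply (summ_bdd _ _ (INR N * B) Hq). intros z. apply fsum_abs. intros; apply HB.
  - induction N as [|N IH].
    + cbn [fsum]. apply Eq_const; auto.
    + cbn [fsum]. rewrite Eq_plus. rewrite IH; auto.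
      apply (summ_bdd _ _ (INR N * B) Hq). intros z. apply fsum_abs. intros; apply HB.
      apply (summ_bdd _ _ B Hq). intros; apply HB.
Qed.

Definition Am q L m := Eq q (fun z => a q L m (Z.min z L)).
Definition mup q L := Eq q (fun z => posZ (Z.min z L)).

Lemma posZ_abs z L : (0 <= L)%Z -> Rabs (posZ (Z.min z L)) <= IZR L.
Proof.
  intros HL. unfold posZ. destruct (Z.ltb_spec 0 (Z.min z L)).
  - rewrite Rabs_pos_eq by (apply IZR_le; lia). apply IZR_le; lia.
  - rewrite Rabs_R0. apply IZR_le; lia.
Qed.

Lemma rec_m q L mneg m N : Z_law q -> (0 <= L)%Z ->
  infinite_sum (fun n => INR n * q (- Z.of_nat n)%Z) mneg ->
  mup q L - fsum (fun k => a q L (S m) (Z.of_nat k + 1)%Z - a q L m (Z.of_nat k + 1)%Z) N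
  <= mneg + IZR L * Am q L m + IZR L * (1 - a q L m (Z.of_nat N + 1)%Z).
Proof.
  intros Hq HL Hm. destruct (Eq_neg q mneg Hq Hm) as [Sn En].
  set (F := fun k z => a q L m (Z.of_nat k + 1 + Z.min z L)%Z - a q L m (Z.of_nat k + 1)%Z).
  assert (HFb : forall k z, Rabs (F k z) <= 2).
  { intros k z; unfold F. pose proof (a01 q L m (Z.of_nat k + 1 + Z.min z L)%Z Hq).
    pose proof (a01 q L m (Z.of_nat k + 1)%Z Hq). apply Rabs_le; lra. }
  destruct (Eq_fsum q F N 2 Hq HFb) as [SF EF].
  assert (E1 : fsum (fun k => a q L (S m) (Z.of_nat k + 1)%Z - a q L m (Z.of_nat k + 1)%Z) N
               = Eq q (fun z => fsum (fun k => F k z) N)).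
  { rewrite EF. apply fsum_ext. intros k. unfold F.
    change (a q L (S m) (Z.of_nat k + 1)%Z) with
      (if (0 <? Z.of_nat k + 1)%Z then Eq q (fun z => a q L m (Z.of_nat k + 1 + Z.min z L)%Z) else 0).
    replace (0 <? Z.of_nat k + 1)%Z with true by (symmetry; apply Z.ltb_lt; lia).
    unfold Rminus. rewrite Eq_plus, Eq_const; auto. apply a_summ; auto.
    apply (summ_bdd _ _ 1 Hq); intros; rewrite Rabs_Ropp; apply a_abs; auto. }
  rewrite E1.
  assert (SP : summ q (fun z => posZ (Z.min z L))) by (apply (summ_bdd _ _ (IZR L) Hq); intros; apply posZ_abs; auto).
  assert (SA : summ q (fun z => a q L m (Z.min z L))) by (apply (summ_bdd _ _ 1 Hq); intros; apply a_abs; auto).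
  assert (SC : forall c, summ q (fun _ => c)) by (intros c; apply (summ_bdd _ _ (Rabs c) Hq); intros; lra).
  assert (EL : mup q L - Eq q (fun z => fsum (fun k => F k z) N) =
               Eq q (fun z => posZ (Z.min z L) + (-1) * fsum (fun k => F k z) N)).
  { rewrite Eq_plus, Eq_scal; auto. unfold mup; ring. apply summ_scal; auto. }
  assert (ER : mneg + IZR L * Am q L m + IZR L * (1 - a q L m (Z.of_nat N + 1)%Z) =
               Eq q (fun z => negZ z + (IZR L * a q L m (Z.min z L) + IZR L * (1 - a q L m (Z.of_nat N + 1)%Z)))).
  { rewrite Eq_plus, Eq_plus, Eq_scal, Eq_const, En; auto. unfold Am; ring.
    apply summ_scal; auto. apply summ_plus; auto. apply summ_scal; auto. }
  rewrite EL, ER. apply Eq_le; auto.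
  - apply summ_plus; auto. apply summ_scal; auto.
  - apply summ_plus; auto. apply summ_plus; auto. apply summ_scal; auto.
  - intros z.
    pose proof (perx (a q L m) L (Z.min z L) N (fun k => a01 q L m k Hq) (fun k k' H => a_mono q L m k k' Hq H)
                  ltac:(lia) HL) as H.
    assert (HT : T (a q L m) (Z.min z L) N = fsum (fun k => F k z) N) by (unfold T, F; apply fsum_ext; auto).
    assert (HN : negZ (Z.min z L) = negZ z).
    { unfold negZ. destruct (Z.ltb_spec (Z.min z L) 0), (Z.ltb_spec z 0); try lia; auto. f_equal. f_equal. lia. }
    rewrite HT, HN in H. lra.
Qed.

Lemma rec_sum q L mneg N n : Z_law q -> (0 <= L)%Z ->
  infinite_sum (fun n => INR n * q (- Z.of_nat n)%Z) mneg ->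
  INR n * mup q L - (fsum (fun k => a q L n (Z.of_nat k + 1)%Z) N - fsum (fun k => a q L 0 (Z.of_nat k + 1)%Z) N)
  <= INR n * mneg + IZR L * fsum (Am q L) n + IZR L * fsum (fun m => 1 - a q L m (Z.of_nat N + 1)%Z) n.
Proof.
  intros Hq HL Hm. induction n as [|n IH].
  - simpl. lra.
  - pose proof (rec_m q L mneg n N Hq HL Hm) as H. rewrite fsum_minus in H.
    cbn [fsum]. rewrite S_INR. lra.
Qed.

Lemma main_bound q L mneg n : Z_law q -> (0 <= L)%Z ->
  infinite_sum (fun n => INR n * q (- Z.of_nat n)%Z) mneg ->
  INR n * (mup q L - mneg) <= IZR L * fsum (Am q L) n.
Proof.
  intros Hq HL Hm. pose proof (mneg_nonneg q mneg Hq Hm) as Hm0.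
  assert (HL0 : 0 <= IZR L) by (apply IZR_le; auto).
  apply (lim_le _ _ (IZR L * INR n * INR n * mneg)).
  { pose proof (pos_INR n). repeat apply Rmult_le_pos; auto. }
  intros N. pose proof (rec_sum q L mneg N n Hq HL Hm) as H.
  assert (H1 : fsum (fun k => a q L n (Z.of_nat k + 1)%Z) N <= fsum (fun k => a q L 0 (Z.of_nat k + 1)%Z) N).
  { apply fsum_le. intros k. apply a_anti; auto; lia. }
  assert (HN : 0 < INR N + 1) by (pose proof (pos_INR N); lra).
  assert (H2 : fsum (fun m => 1 - a q L m (Z.of_nat N + 1)%Z) n <= INR n * (INR n * mneg / (INR N + 1))).
  { apply fsum_le_const. intros m Hmn. pose proof (a_markov q L mneg m (Z.of_nat N + 1) Hq HL Hm) as Hk.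
    rewrite plus_IZR, <- INR_IZR_INZ in Hk.
    assert (INR m <= INR n) by (apply le_INR; lia).
    apply Rmult_le_reg_r with (INR N + 1); auto. unfold Rdiv. rewrite Rmult_assoc, Rinv_l by lra. nra. }
  assert (H3 : IZR L * fsum (fun m => 1 - a q L m (Z.of_nat N + 1)%Z) n <= IZR L * (INR n * (INR n * mneg / (INR N + 1)))).
  { apply Rmult_le_compat_l; auto. }
  replace (IZR L * INR n * INR n * mneg / (INR N + 1)) with (IZR L * (INR n * (INR n * mneg / (INR N + 1)))) by (field; lra).
  lra.
Qed.

Lemma Am01 q L m : Z_law q -> 0 <= Am q L m <= 1.
Proof.
  intros Hq. unfold Am. split.
  - rewrite <- (Eq_const q 0 Hq). apply Eq_le; auto. apply (summ_bdd _ _ 0 Hq); intros; rewrite Rabs_R0; lra.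
    apply (summ_bdd _ _ 1 Hq); intros; apply a_abs; auto. intros; apply a01; auto.
  - apply Rle_trans with (Eq q (fun _ => 1)); [|rewrite Eq_const; auto; lra].
    apply Eq_le; auto. apply (summ_bdd _ _ 1 Hq); intros; apply a_abs; auto.
    apply (summ_bdd _ _ 1 Hq); intros; rewrite Rabs_R1; lra. intros; apply a01; auto.
Qed.

Lemma Am_step q L m : Z_law q -> Am q L (S m) <= Am q L m.
Proof.
  intros Hq. unfold Am. apply Eq_le; auto; try (apply (summ_bdd _ _ 1 Hq); intros; apply a_abs; auto).
  intros; apply a_step; auto.
Qed.

Lemma Am_anti q L m m' : Z_law q -> (m <= m')%nat -> Am q L m' <= Am q L m.
Proof. intros Hq H; induction H; [lra|]. eapply Rle_trans; [apply Am_step; auto|auto]. Qed.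

Lemma fsum_Am q L m n : Z_law q -> fsum (Am q L) n <= INR m + INR n * Am q L m.
Proof.
  intros Hq. pose proof (Am01 q L m Hq).
  assert (forall n, fsum (Am q L) n <= INR (Nat.min n m) + INR (n - m) * Am q L m).
  { induction n0 as [|n0 IH]; cbn [fsum]; [simpl; lra|].
    destruct (Nat.lt_ge_cases n0 m).
    - replace (Nat.min (S n0) m) with (S (Nat.min n0 m)) by lia.
      replace (S n0 - m)%nat with (n0 - m)%nat by lia. rewrite S_INR.
      pose proof (Am01 q L n0 Hq). lra.
    - match goal with Hx : (m <= n0)%nat |- _ => rename Hx into Hge end. replace (Nat.min (S n0) m) with (Nat.min n0 m) by lia.
      replace (S n0 - m)%nat with (S (n0 - m)) by lia. rewrite S_INR.
      pose proof (Am_anti q L m n0 Hq Hge). lra. }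
  specialize (H0 n).
  assert (INR (Nat.min n m) <= INR m) by (apply le_INR; lia).
  assert (INR (n - m) <= INR n) by (apply le_INR; lia).
  assert (INR (n - m) * Am q L m <= INR n * Am q L m) by (apply Rmult_le_compat_r; lra).
  lra.
Qed.

Lemma A_lower q L mneg m : Z_law q -> (0 <= L)%Z ->
  infinite_sum (fun n => INR n * q (- Z.of_nat n)%Z) mneg ->
  mup q L - mneg <= IZR L * Am q L m.
Proof.
  intros Hq HL Hm. assert (HL0 : 0 <= IZR L) by (apply IZR_le; auto).
  assert (H : mup q L - mneg - IZR L * Am q L m <= 0).
  { apply (lim_le _ _ (IZR L * INR m)). pose proof (pos_INR m); nra.
    intros n. pose proof (main_bound q L mneg (S n) Hq HL Hm) as H1.
    pose proof (fsum_Am q L m (S n) Hq) as H2. rewrite S_INR in *.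
    assert (HN : 0 < INR n + 1) by (pose proof (pos_INR n); lra).
    assert (H3 : (INR n + 1) * (mup q L - mneg - IZR L * Am q L m) <= IZR L * INR m) by nra.
    replace (0 + IZR L * INR m / (INR n + 1)) with (IZR L * INR m / (INR n + 1)) by ring.
    apply Rmult_le_reg_l with (INR n + 1); auto.
    replace ((INR n + 1) * (IZR L * INR m / (INR n + 1))) with (IZR L * INR m) by (field; lra). lra. }
  lra.
Qed.

Lemma K_nonneg p x f B : stochastic_kernel p -> (forall y, Rabs (f y) <= B) -> (forall y, 0 <= f y) -> 0 <= K p x f.
Proof.
  intros Hp Hb H. rewrite <- (K_const p x 0 Hp). apply (K_le p x _ _ 0 B Hp); auto.
  intros; rewrite Rabs_R0; lra.
Qed.

Theorem proposition4 (p : nat -> nat -> R) (q : Z -> R) :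
  stochastic_kernel p ->
  Z_law q ->
  Z_mean_pos q ->
  (forall (i : nat) (j : Z), Z_tail q j <= jump_tail p i j) ->
  exists g : R, 0 < g /\
    exists M : R, forall (i n : nat), exp_loc p g i n i <= M.
Proof.
  intros Hp Hq [mneg [Hm [N0 HN0]]] Hdom.
  set (L := Z.of_nat (S N0)).
  assert (HL : (0 <= L)%Z) by (unfold L; lia).
  assert (HL1 : 1 <= IZR L) by (unfold L; apply IZR_le; lia).
  assert (Hmup : sum_f_R0 (fun n => INR n * q (Z.of_nat n)) N0 <= mup q L).
  { unfold mup.
    assert (SP : summ q (fun z => posZ (Z.min z L))) by (apply (summ_bdd _ _ (IZR L) Hq); intros; apply posZ_abs; auto).
    rewrite (sum_eq _ (et q (fun z => posZ (Z.min z L)))).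
    - apply ser_partial. apply summ_is; auto.
      intros n; unfold et. destruct Hq as [Hq0 _].
      assert (forall z, 0 <= posZ z) by (intros z; unfold posZ; destruct (Z.ltb_spec 0 z); [apply IZR_le; lia| lra]).
      pose proof (Hq0 (Z.of_nat n)). pose proof (Hq0 (- Z.of_nat n - 1)%Z).
      pose proof (H (Z.min (Z.of_nat n) L)). pose proof (H (Z.min (- Z.of_nat n - 1) L)). nra.
    - intros i Hi. unfold et, posZ.
      replace (Z.min (Z.of_nat i) L) with (Z.of_nat i) by (unfold L; lia).
      replace (Z.min (- Z.of_nat i - 1) L) with (- Z.of_nat i - 1)%Z by (unfold L; lia).
      destruct (Z.ltb_spec 0 (- Z.of_nat i - 1)); [lia|].
      rewrite INR_IZR_INZ. destruct (Z.ltb_spec 0 (Z.of_nat i)).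
      + ring.
      + replace (Z.of_nat i) with 0%Z by lia. simpl. ring. }
  set (theta := (mup q L - mneg) / IZR L).
  assert (Hth0 : 0 < theta).
  { unfold theta. apply Rdiv_lt_0_compat; lra. }
  assert (HA : forall m, theta <= Am q L m).
  { intros m. pose proof (A_lower q L mneg m Hq HL Hm). unfold theta.
    apply Rmult_le_reg_l with (IZR L); [lra|]. unfold Rdiv.
    replace (IZR L * ((mup q L - mneg) * / IZR L)) with (mup q L - mneg) by (field; lra). lra. }
  assert (Hth1 : theta <= 1) by (pose proof (HA 0%nat); pose proof (Am01 q L 0 Hq); lra).
  set (g := ln (2 / (2 - theta))).
  assert (Heg : exp g = 2 / (2 - theta)) by (unfold g; apply exp_ln; apply Rdiv_lt_0_compat; lra).
  assert (Hg : 0 < g).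
  { apply exp_lt_inv. rewrite exp_0, Heg. apply Rmult_lt_reg_r with (2 - theta); [lra|].
    unfold Rdiv. rewrite Rmult_assoc, Rinv_l by lra. lra. }
  assert (Heg2 : exp g * (2 - theta) = 2) by (rewrite Heg; field; lra).
  exists g. split; auto. exists 2. intros i.
  assert (Main : forall n x, 0 <= exp_loc p g i n x <= 2 - a q L n (Z.of_nat x - Z.of_nat i)%Z).
  { intros n. induction n as [|n IH]; intros x.
    - simpl exp_loc. destruct (Nat.eqb_spec x i).
      + subst x. simpl ind. rewrite Rmult_1_r.
        replace (Z.of_nat i - Z.of_nat i)%Z with 0%Z by lia. simpl a. simpl ind.
        pose proof (exp_pos g). assert (exp g <= 2) by nra. lra.
      + simpl ind. rewrite Rmult_0_r, exp_0. pose proof (a01 q L 0 (Z.of_nat x - Z.of_nat i)%Z Hq). lra.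
    - change (exp_loc p g i (S n) x) with (exp (g * ind (Nat.eqb x i)) * K p x (exp_loc p g i n)).
      set (k := (Z.of_nat x - Z.of_nat i)%Z).
      assert (Hb : forall y, Rabs (exp_loc p g i n y) <= 2).
      { intros y. specialize (IH y). pose proof (a01 q L n (Z.of_nat y - Z.of_nat i)%Z Hq).
        rewrite Rabs_pos_eq; lra. }
      assert (HB0 : 0 <= K p x (exp_loc p g i n)) by (apply (K_nonneg p x _ 2 Hp Hb); intros; apply IH).
      set (phi := fun d => 1 - a q L n (d + k)%Z).
      assert (Hphi01 : forall d, 0 <= phi d <= 1) by (intros d; unfold phi; pose proof (a01 q L n (d + k)%Z Hq); lra).
      assert (Hphimon : forall d d', (d <= d')%Z -> phi d' <= phi d).
      { intros d d' Hd; unfold phi. pose proof (a_mono q L n (d + k)%Z (d' + k)%Z Hq ltac:(lia)). lra. }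
      pose proof (dom p q L x mneg Hp Hq Hdom HL Hm phi Hphi01 Hphimon) as HD.
      set (E := Eq q (fun z => a q L n (k + Z.min z L)%Z)).
      assert (HE01 : 0 <= E <= 1).
      { pose proof (a01 q L (S n) k Hq). unfold E. simpl a in H.
        destruct (Z.ltb_spec 0 k).
        - exact H.
        - split.
          + rewrite <- (Eq_const q 0 Hq). apply Eq_le; auto. apply (summ_bdd _ _ 0 Hq); intros; rewrite Rabs_R0; lra.
            apply a_summ; auto. intros; apply a01; auto.
          + apply Rle_trans with (Eq q (fun _ => 1)); [|rewrite Eq_const; auto; lra].
            apply Eq_le; auto. apply a_summ; auto.
            apply (summ_bdd _ _ 1 Hq); intros; rewrite Rabs_R1; lra. intros; apply a01; auto. }
      assert (HPk : Pk p x phi = 1 - K p x (fun y => a q L n (Z.of_nat y - Z.of_nat i)%Z)).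
      { unfold Pk, phi. rewrite (K_ext p x _ (fun y => 1 + (-1) * a q L n (Z.of_nat y - Z.of_nat i)%Z)).
        rewrite (K_lin p x _ _ (-1) 1 1 Hp), K_const; auto. ring.
        intros; rewrite Rabs_R1; lra. intros; apply a_abs; auto.
        intros y. unfold k. replace (Z.of_nat y - Z.of_nat x + (Z.of_nat x - Z.of_nat i))%Z with (Z.of_nat y - Z.of_nat i)%Z by lia. ring. }
      assert (HQk : Qk q L phi = 1 - E).
      { unfold Qk, phi, E. rewrite (Eq_ext q _ (fun z => 1 + (-1) * a q L n (k + Z.min z L)%Z)).
        rewrite Eq_plus, Eq_scal, Eq_const; auto. ring. apply a_summ; auto.
        apply (summ_bdd _ _ 1 Hq); intros; rewrite Rabs_R1; lra. apply summ_scal, a_summ; auto.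
        intros z. replace (Z.min z L + k)%Z with (k + Z.min z L)%Z by lia. ring. }
      assert (HKB : K p x (exp_loc p g i n) <= 2 - E).
      { apply Rle_trans with (K p x (fun y => 2 + (-1) * a q L n (Z.of_nat y - Z.of_nat i)%Z)).
        - apply (K_le p x _ _ 2 3 Hp); auto.
          + intros y. pose proof (a01 q L n (Z.of_nat y - Z.of_nat i)%Z Hq). apply Rabs_le; lra.
          + intros y. specialize (IH y). lra.
        - rewrite (K_lin p x _ _ (-1) 2 1 Hp), K_const; auto.
          + lra.
          + intros; rewrite Rabs_pos_eq; lra.
          + intros; apply a_abs; auto. }
      destruct (Nat.eqb_spec x i) as [Hxi|Hxi].
      + subst x. replace k with 0%Z in * by (unfold k; lia). simpl ind. rewrite Rmult_1_r.
        rewrite a_le0 by lia.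
        assert (HEA : E = Am q L n).
        { unfold E, Am. apply Eq_ext. intros z. f_equal. lia. }
        pose proof (HA n). pose proof (exp_pos g).
        assert (exp g * K p i (exp_loc p g i n) <= exp g * (2 - theta)) by (apply Rmult_le_compat_l; lra).
        split; [apply Rmult_le_pos; lra| lra].
      + simpl ind. rewrite Rmult_0_r, exp_0, Rmult_1_l.
        destruct (Z.ltb_spec 0 k).
        * assert (HaS : a q L (S n) k = E).
          { unfold E. simpl. destruct (Z.ltb_spec 0 k); [reflexivity| lia]. }
          rewrite HaS. lra.
        * rewrite a_le0 by lia. lra. }
  intros n. pose proof (Main n i). rewrite a_le0 in H by lia. lra.
Qed.
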